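(* Let $(I,\preccurlyeq)$ be a directed set, let $S(\Lambda^{\succcurlyeq})$ be a contravariant direct spectrum over $(I,\preccurlyeq)$ with sets $\lambda_0(i)$, transports $\lambda^{\succcurlyeq}_{ji}$ and Bishop spaces $\mathcal F_i=(\lambda_0(i),F_i)$, let $\mathcal F=(X,F)$ be a Bishop space, and let $S(\Lambda^{\succcurlyeq})\to\mathcal F$ be the direct spectrum over $(I,\preccurlyeq)$ with sets $\mathrm{Mor}(\mathcal F_i,\mathcal F)$, transports $(\lambda^{\succcurlyeq}_{ji})^+:\mathrm{Mor}(\mathcal F_i,\mathcal F)\to\mathrm{Mor}(\mathcal F_j,\mathcal F)$, $\phi\mapsto\phi\circ\lambda^{\succcurlyeq}_{ji}$ (for $i\preccurlyeq j$), and Bishop spaces $\mathcal F_i\to\mathcal F$. Then there is a function $\widehat{\ }:\underset{\to}{\mathrm{Lim}}\,[\mathrm{Mor}(\mathcal F_i,\mathcal F)]\to\mathrm{Mor}(\underset{\leftarrow}{\mathrm{Lim}}\,\mathcal F_i,\mathcal F)$ such that: (i) $\widehat{\ }\in\mathrm{Mor}(\underset{\to}{\mathrm{Lim}}\,(\mathcal F_i\to\mathcal F),(\underset{\leftarrow}{\mathrm{Lim}}\,\mathcal F_i)\to\mathcal F)$; (ii) if for every $j\in I$ and every $y\in\lambda_0(j)$ there is $\Theta_y\in\prod^{\succcurlyeq}_{i\in I}\lambda_0(i)$ with $\Theta_y(j)=y$ in $\lambda_0(j)$, then $\widehat{\ }$ is an embedding.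
   Context: Work in Bishop-style constructive mathematics. Each set has its own equality; functions respect it; an embedding $f$ satisfies $f(x)=f(x')\Rightarrow x=x'$. A directed set: a set with a reflexive transitive relation respecting equality, any two elements having a common upper bound. A direct family over $(I,\preccurlyeq)$: sets $\mu_0(i)$ and functions $\mu^{\preccurlyeq}_{ij}:\mu_0(i)\to\mu_0(j)$ for $i\preccurlyeq j$ with $\mu^{\preccurlyeq}_{ii}=\mathrm{id}$, $\mu^{\preccurlyeq}_{ik}=\mu^{\preccurlyeq}_{jk}\circ\mu^{\preccurlyeq}_{ij}$. A contravariant direct family: sets $\lambda_0(i)$ and functions $\lambda^{\succcurlyeq}_{ji}:\lambda_0(j)\to\lambda_0(i)$ for $i\preccurlyeq j$ with $\lambda^{\succcurlyeq}_{ii}=\mathrm{id}$, $\lambda^{\succcurlyeq}_{ki}=\lambda^{\succcurlyeq}_{ji}\circ\lambda^{\succcurlyeq}_{kj}$. Bishop spaces: a Bishop topology on $X$ is a set $F$ of functions $X\to\mathbb R$ containing constants, closed under addition, composition with functions $\mathbb R\to\mathbb R$ uniformly continuous on every $[-n,n]$, and uniform limits; $\bigvee F_0$ = least Bishop topology containing $F_0$; Bishop morphism $(X,F)\to(Y,G)$: function $h$ with $g\circ h\in F$ for all $g\in G$. Exponential: $\mathcal F\to\mathcal G=(\mathrm{Mor}(\mathcal F,\mathcal G),\bigvee\{\phi_{x,g}\})$, $\phi_{x,g}(h)=g(h(x))$. A (contravariant) direct spectrum: a (contravariant) direct family with Bishop topologies making all transports Bishop morphisms. Direct limit of a direct spectrum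 (sets $\mu_0(i)$, transports $\mu^{\preccurlyeq}_{ij}$, topologies $G_i$): pairs $(i,x)$ with $(i,x)=(j,y)$ iff there is $k\succcurlyeq i,j$ with $\mu^{\preccurlyeq}_{ik}(x)=\mu^{\preccurlyeq}_{jk}(y)$; $\underset{\to}{\mathrm{Lim}}\,\mu_0(i)$ = classes $\mathrm{eql}_0(i,x)$; $\prod^{\succcurlyeq}G_i$ = dependent $\Theta$ with $\Theta_i\in G_i$, $\Theta_i=\Theta_j\circ\mu^{\preccurlyeq}_{ij}$; $\underset{\to}{\mathrm{Lim}}\,\mathcal G_i=(\underset{\to}{\mathrm{Lim}}\,\mu_0(i),\bigvee\{\mathrm{eql}_0f_\Theta\})$ with $\mathrm{eql}_0f_\Theta(\mathrm{eql}_0(i,x))=\Theta_i(x)$. Inverse limit of the contravariant spectrum: $\prod^{\succcurlyeq}\lambda_0(i)$ = dependent $\Phi$ with $\Phi_i\in\lambda_0(i)$, $\Phi_i=\lambda^{\succcurlyeq}_{ji}(\Phi_j)$ for $i\preccurlyeq j$; $\pi_i(\Phi)=\Phi_i$; $\underset{\leftarrow}{\mathrm{Lim}}\,\mathcal F_i=(\prod^{\succcurlyeq}\lambda_0(i),\bigvee\{f\circ\pi_i:i\in I,f\in F_i\})$. *)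

(* Defs.v *)
From Stdlib Require Import Reals Lra RelationClasses Setoid Morphisms.
Open Scope R_scope.

Record Setoid := { car :> Type; eqv : car -> car -> Prop; eqv_equiv : Equivalence eqv }.
Arguments eqv {s} _ _.
#[global] Existing Instance eqv_equiv.
Notation "x =s= y" := (eqv x y) (at level 70, no associativity).

Record Fun (X Y : Setoid) := { fmap :> X -> Y;
  fresp : forall x x', x =s= x' -> fmap x =s= fmap x' }.
Arguments fmap {X Y} _ _.
Arguments fresp {X Y} _ _ _ _.

Definition Embedding {X Y : Setoid} (f : Fun X Y) : Prop :=
  forall x x', f x =s= f x' -> x =s= x'.

Definition Bcont (phi : R -> R) : Prop :=
  forall n : nat, forall eps, 0 < eps -> exists delta, 0 < delta /\
    forall x y, Rabs x <= INR n -> Rabs y <= INR n -> Rabs (x - y) < delta ->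
      Rabs (phi x - phi y) < eps.

Definition extensional (X : Setoid) (f : X -> R) : Prop :=
  forall x x', x =s= x' -> f x = f x'.

Record BishopTop (X : Setoid) (F : (X -> R) -> Prop) : Prop := {
  bt_ext : forall f, F f -> extensional X f;
  bt_const : forall a : R, F (fun _ => a);
  bt_add : forall f g, F f -> F g -> F (fun x => f x + g x);
  bt_comp : forall f phi, F f -> Bcont phi -> F (fun x => phi (f x));
  bt_lim : forall f, extensional X f ->
    (forall eps, 0 < eps -> exists g, F g /\ forall x, Rabs (g x - f x) <= eps) -> F f }.

Definition bigvee (X : Setoid) (F0 : (X -> R) -> Prop) : (X -> R) -> Prop :=
  fun f => forall G, BishopTop X G -> (forall g, F0 g -> G g) -> G f.

Lemma extensional_top (X : Setoid) : BishopTop X (extensional X).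
Proof.
  split.
  - auto.
  - intros a x x' _; reflexivity.
  - intros f g Hf Hg x x' H; rewrite (Hf x x' H), (Hg x x' H); reflexivity.
  - intros f phi Hf _ x x' H; rewrite (Hf x x' H); reflexivity.
  - auto.
Qed.

Lemma bigvee_top (X : Setoid) (F0 : (X -> R) -> Prop) :
  (forall f, F0 f -> extensional X f) -> BishopTop X (bigvee X F0).
Proof.
  intros H0; split.
  - intros f Hf; exact (Hf _ (extensional_top X) H0).
  - intros a G HG _; apply (bt_const _ _ HG).
  - intros f g Hf Hg G HG HF; apply (bt_add _ _ HG); [exact (Hf G HG HF) | exact (Hg G HG HF)].
  - intros f phi Hf Hphi G HG HF; apply (bt_comp _ _ HG); [exact (Hf G HG HF) | exact Hphi].
  - intros f Hext Hlim G HG HF; apply (bt_lim _ _ HG); [exact Hext|].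
    intros eps Heps; destruct (Hlim eps Heps) as [g [Hg Hgf]].
    exists g; split; [exact (Hg G HG HF) | exact Hgf].
Qed.

Record BSpace := { bs :> Setoid; top : (bs -> R) -> Prop; top_ok : BishopTop bs top }.

Definition IsMor (A B : BSpace) (h : Fun A B) : Prop :=
  forall g, top B g -> top A (fun x => g (h x)).

Record Mor (A B : BSpace) := { mfun :> Fun A B; mor_ok : IsMor A B mfun }.
Arguments mfun {A B} _.

Definition MorS (A B : BSpace) : Setoid.
Proof.
  refine {| car := Mor A B; eqv := fun h h' => forall x, h x =s= h' x |}.
  split.
  - intros h x; reflexivity.
  - intros h h' H x; symmetry; auto.
  - intros h h' h'' H H' x; transitivity (h' x); auto.
Defined.

Definition exp_gen (A B : BSpace) : (MorS A B -> R) -> Prop :=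
  fun f => exists (x : A) (g : B -> R), top B g /\ f = (fun h : MorS A B => g (h x)).

Lemma exp_gen_ext A B : forall f, exp_gen A B f -> extensional (MorS A B) f.
Proof.
  intros f [x [g [Hg ->]]] h h' H.
  apply (bt_ext _ _ (top_ok B) g Hg); apply H.
Qed.

Definition Exp (A B : BSpace) : BSpace :=
  {| bs := MorS A B; top := bigvee (MorS A B) (exp_gen A B);
     top_ok := bigvee_top _ _ (exp_gen_ext A B) |}.

Record DirSet := { ds :> Setoid; le : ds -> ds -> Prop;
  le_resp : forall i i' j j', i =s= i' -> j =s= j' -> le i j -> le i' j';
  le_refl : forall i, le i i;
  le_trans : forall i j k, le i j -> le j k -> le i k;
  le_dir : forall i j, exists k, le i k /\ le j k }.
Arguments le {d} _ _.

Record DirFam (I : DirSet) := {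
  mu0 : I -> BSpace;
  mu : forall i j, le i j -> Fun (mu0 i) (mu0 j);
  mu_id : forall i (p : le i i) x, mu i i p x =s= x;
  mu_comp : forall i j k (p : le i j) (q : le j k) (r : le i k) x,
      mu i k r x =s= mu j k q (mu i j p x) }.
Arguments mu0 {I} _ _.
Arguments mu {I} _ _ _ _.

Record ContraSpec (I : DirSet) := {
  lam0 : I -> BSpace;
  lam : forall i j, le i j -> Fun (lam0 j) (lam0 i);
  lam_id : forall i (p : le i i) x, lam i i p x =s= x;
  lam_comp : forall i j k (p : le i j) (q : le j k) (r : le i k) x,
      lam i k r x =s= lam i j p (lam j k q x);
  lam_mor : forall i j (p : le i j), IsMor (lam0 j) (lam0 i) (lam i j p) }.
Arguments lam0 {I} _ _.
Arguments lam {I} _ _ _ _.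

Section DirLimit.
Variables (I : DirSet) (M : DirFam I).

Definition dl_eq (a b : {i : I & mu0 M i}) : Prop :=
  exists k (p : le (projT1 a) k) (q : le (projT1 b) k),
    mu M _ k p (projT2 a) =s= mu M _ k q (projT2 b).

Lemma dl_equiv : Equivalence dl_eq.
Proof.
  split.
  - intros [i x]; exists i, (le_refl I i), (le_refl I i); reflexivity.
  - intros [i x] [j y] [k [p [q H]]]; exists k, q, p; symmetry; exact H.
  - intros [i x] [j y] [l z] [k [p [q H]]] [m [p' [q' H']]]; simpl in *.
    destruct (le_dir I k m) as [n [hk hm]].
    exists n, (le_trans I _ _ _ p hk), (le_trans I _ _ _ q' hm); simpl.
    rewrite (mu_comp _ M _ _ _ p hk).
    rewrite (fresp (mu M k n hk) _ _ H).
    rewrite <- (mu_comp _ M _ _ _ q hk (le_trans I _ _ _ q hk)).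
    rewrite (mu_comp _ M _ _ _ p' hm).
    rewrite (fresp (mu M m n hm) _ _ H').
    rewrite <- (mu_comp _ M _ _ _ q' hm).
    reflexivity.
Qed.

Definition DirLimS : Setoid :=
  {| car := {i : I & mu0 M i}; eqv := dl_eq; eqv_equiv := dl_equiv |}.

Definition dl_gen : (DirLimS -> R) -> Prop :=
  fun f => exists Theta : forall i, mu0 M i -> R,
    (forall i, top (mu0 M i) (Theta i)) /\
    (forall i j (p : le i j) x, Theta i x = Theta j (mu M i j p x)) /\
    f = (fun a : DirLimS => Theta (projT1 a) (projT2 a)).

Lemma dl_gen_ext : forall f, dl_gen f -> extensional DirLimS f.
Proof.
  intros f [Th [HT [Hc ->]]] [i x] [j y] [k [p [q H]]]; simpl in *.
  rewrite (Hc i k p x), (Hc j k q y).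
  apply (bt_ext _ _ (top_ok (mu0 M k)) _ (HT k)); exact H.
Qed.

Definition DirLim : BSpace :=
  {| bs := DirLimS; top := bigvee DirLimS dl_gen; top_ok := bigvee_top _ _ dl_gen_ext |}.
End DirLimit.

Section InvLimit.
Variables (I : DirSet) (L : ContraSpec I).

Definition InvLimCar : Type :=
  {Phi : forall i, lam0 L i | forall i j (p : le i j), Phi i =s= lam L i j p (Phi j)}.

Definition InvLimS : Setoid.
Proof.
  refine {| car := InvLimCar;
            eqv := fun Phi Psi => forall i, proj1_sig Phi i =s= proj1_sig Psi i |}.
  split.
  - intros P i; reflexivity.
  - intros P Q H i; symmetry; auto.
  - intros P Q U H H' i; transitivity (proj1_sig Q i); auto.
Defined.

Definition il_gen : (InvLimS -> R) -> Prop :=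
  fun f => exists i (g : lam0 L i -> R), top (lam0 L i) g /\
    f = (fun Phi : InvLimS => g (proj1_sig Phi i)).

Lemma il_gen_ext : forall f, il_gen f -> extensional InvLimS f.
Proof.
  intros f [i [g [Hg ->]]] P Q H.
  apply (bt_ext _ _ (top_ok (lam0 L i)) g Hg); apply H.
Qed.

Definition InvLim : BSpace :=
  {| bs := InvLimS; top := bigvee InvLimS il_gen; top_ok := bigvee_top _ _ il_gen_ext |}.
End InvLimit.

Section ToF.
Variables (I : DirSet) (L : ContraSpec I) (F : BSpace).

Definition precomp_fun i j (p : le i j) (phi : Mor (lam0 L i) F) : Fun (lam0 L j) F :=
  {| fmap := fun y => phi (lam L i j p y);
     fresp := fun y y' H => fresp phi _ _ (fresp (lam L i j p) _ _ H) |}.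

Lemma precomp_mor i j (p : le i j) (phi : Mor (lam0 L i) F) :
  IsMor (lam0 L j) F (precomp_fun i j p phi).
Proof.
  intros g Hg; simpl.
  apply (lam_mor _ L i j p (fun x => g (phi x))).
  apply (mor_ok _ _ phi); exact Hg.
Qed.

Definition precomp i j (p : le i j) (phi : Mor (lam0 L i) F) : Mor (lam0 L j) F :=
  {| mfun := precomp_fun i j p phi; mor_ok := precomp_mor i j p phi |}.

Definition plus_tr i j (p : le i j) : Fun (Exp (lam0 L i) F) (Exp (lam0 L j) F).
Proof.
  refine (@Build_Fun (Exp (lam0 L i) F) (Exp (lam0 L j) F) (precomp i j p) _).
  intros phi phi' H y; simpl; apply H.
Defined.

Definition ToFam : DirFam I.
Proof.
  refine {| mu0 := fun i => Exp (lam0 L i) F; mu := plus_tr |}.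
  - intros i p phi y; simpl.
    apply (fresp phi); apply (lam_id _ L).
  - intros i j k p q r phi y; simpl.
    apply (fresp phi); apply (lam_comp _ L).
Defined.
End ToF.

(* Main.v *)
Require Import Defs.
From Stdlib Require Import Reals Lra RelationClasses Setoid Morphisms.
Open Scope R_scope.

Definition compF {A B C : Setoid} (g : Fun B C) (f : Fun A B) : Fun A C :=
  {| fmap := fun x => g (f x); fresp := fun x x' H => fresp g _ _ (fresp f _ _ H) |}.

Lemma compM_ok (A B C : BSpace) (g : Mor B C) (f : Mor A B) : IsMor A C (compF g f).
Proof. intros h Hh; simpl. apply (mor_ok _ _ f (fun y => h (g y))). apply (mor_ok _ _ g). exact Hh. Qed.

Definition compM {A B C : BSpace} (g : Mor B C) (f : Mor A B) : Mor A C :=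
  {| mfun := compF g f; mor_ok := compM_ok A B C g f |}.

Definition projF (I : DirSet) (L : ContraSpec I) (i : I) : Fun (InvLim I L) (lam0 L i) :=
  {| fmap := fun P : InvLimS I L => proj1_sig P i; fresp := fun P Q H => H i |}.

Lemma projM_ok I L i : IsMor (InvLim I L) (lam0 L i) (projF I L i).
Proof. intros g Hg G HG HF; apply HF; exists i, g; split; [exact Hg | reflexivity]. Qed.

Definition projM I L i : Mor (InvLim I L) (lam0 L i) :=
  {| mfun := projF I L i; mor_ok := projM_ok I L i |}.

Definition hatmap I L F (a : DirLim I (ToFam I L F)) : Exp (InvLim I L) F :=
  compM (projT2 a : Mor (lam0 L (projT1 a)) F) (projM I L (projT1 a)).

Lemma hat_resp I L F : forall a b, a =s= b -> hatmap I L F a =s= hatmap I L F b.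
Proof.
  intros [i phi] [j psi] [k [p [q H]]] P; simpl in *.
  specialize (H (proj1_sig P k)). simpl in H.
  destruct P as [P HP]; simpl.
  rewrite (fresp phi _ _ (HP i k p)), (fresp psi _ _ (HP j k q)). exact H.
Qed.

Definition hat I L F : Fun (DirLim I (ToFam I L F)) (Exp (InvLim I L) F) :=
  {| fmap := hatmap I L F; fresp := hat_resp I L F |}.

Theorem proposition11p4 (I : DirSet) (L : ContraSpec I) (F : BSpace) :
  exists hat : Fun (DirLim I (ToFam I L F)) (Exp (InvLim I L) F),
    IsMor (DirLim I (ToFam I L F)) (Exp (InvLim I L) F) hat /\
    ((forall (j : I) (y : lam0 L j),
        exists Theta : InvLimS I L, proj1_sig Theta j =s= y) ->
     Embedding hat).
Proof.
  exists (hat I L F); split.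
  - intros f Hf.
    set (H := fun f : Exp (InvLim I L) F -> R =>
           extensional (Exp (InvLim I L) F) f /\
           top (DirLim I (ToFam I L F)) (fun x => f (hat I L F x))).
    assert (HB : BishopTop _ H).
    { split.
      - intros g [Hg _]; exact Hg.
      - intros a; split; [apply (bt_const _ _ (extensional_top _))|].
        apply (bt_const _ _ (top_ok _)).
      - intros g h [Hg1 Hg2] [Hh1 Hh2]; split.
        + apply (bt_add _ _ (extensional_top _)); auto.
        + apply (bt_add _ _ (top_ok (DirLim I (ToFam I L F))) _ _ Hg2 Hh2).
      - intros g phi [Hg1 Hg2] Hphi; split.
        + apply (bt_comp _ _ (extensional_top _)); auto.
        + apply (bt_comp _ _ (top_ok (DirLim I (ToFam I L F))) _ _ Hg2 Hphi).
      - intros g Hext Hlim; split; [exact Hext|].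
        apply (bt_lim _ _ (top_ok (DirLim I (ToFam I L F)))).
        + intros a b Hab; apply Hext; apply (fresp (hat I L F)); exact Hab.
        + intros eps Heps; destruct (Hlim eps Heps) as [g' [[_ Hg'] Hb]].
          exists (fun x => g' (hat I L F x)); split; [exact Hg'|].
          intros x; apply Hb. }
    apply (Hf H HB).
    intros g [P [g0 [Hg0 ->]]]; split.
    + apply exp_gen_ext; exists P, g0; auto.
    + intros G HG HF; apply HF.
      exists (fun i (phi : mu0 (ToFam I L F) i) => g0 ((phi : Mor (lam0 L i) F) (proj1_sig P i))).
      split; [|split].
      * intros i G' HG' HF'; apply HF'. exists (proj1_sig P i), g0; split; [exact Hg0|reflexivity].
      * intros i j p phi; simpl.
        apply (bt_ext _ _ (top_ok F) g0 Hg0).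
        apply (fresp phi). destruct P as [P HP]; apply HP.
      * reflexivity.
  - intros Hsurj [i phi] [j psi] Heq.
    destruct (le_dir I i j) as [k [p q]].
    exists k, p, q; simpl; intros y.
    destruct (Hsurj k y) as [T HT].
    specialize (Heq T); simpl in Heq.
    destruct T as [T HTc]; simpl in *.
    transitivity (phi (T i)).
    { symmetry; apply (fresp phi). transitivity (lam L i k p (T k)); [apply HTc|].
      apply (fresp (lam L i k p)); exact HT. }
    transitivity (psi (T j)); [exact Heq|].
    apply (fresp psi). transitivity (lam L j k q (T k)); [apply HTc|].
    apply (fresp (lam L j k q)); exact HT.
Qed.
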